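(* Let $w\in\widehat W_{\mathrm{reg}}$ and $i\in\{0,\dots,l\}$, and put $\sigma=ws_i$. Then $\ker(\mathrm{id}-\tilde\sigma)$ is one-dimensional, the range $\mathrm{ran}(\mathrm{id}-\sigma)=\{x-\sigma(x)\mid x\in V\}$ is an affine hyperplane, and \[V_{w,i}=V_{\sigma,i}\subset\mathrm{ran}(\mathrm{id}-\sigma).\] Moreover $n_{w,i}$ is a normal vector to the affine hyperplane $\mathrm{ran}(\mathrm{id}-\sigma)$, and $\langle n_{w,i},\alpha_i^\vee\rangle=1$.
   Context: $V$ is a finite-dimensional real Euclidean space, $W$ an irreducible Weyl group acting on $V$ with simple roots $\alpha_1,\dots,\alpha_l$, highest root $\alpha_{\max}$, $\alpha_0:=-\alpha_{\max}$, $\alpha^\vee=2\alpha/\langle\alpha,\alpha\rangle$. Alcove $A=\{x\mid\langle\alpha_i,x\rangle+\delta_{i,0}>0,\ i=0,\dots,l\}$; $A_i$ is its face where $\langle\alpha_i,x\rangle+\delta_{i,0}=0$ and the other inequalities are strict. $\widehat W$ is generated by $s_i(x)=x-(\langle\alpha_i,x\rangle+\delta_{i,0})\alpha_i^\vee$. For $w\in\widehat W$, $\tilde w(x)=w(x)-w(0)$ is its linear part. $V_{w,i}=(\mathrm{id}-w)(A_i)$. $\widehat W_{\mathrm{reg}}=\{w\mid \mathrm{id}-\tilde w\text{ invertible}\}$, and for $w\in\widehat W_{\mathrm{reg}}$, $n_{w,i}:=(\mathrm{id}-\tilde w^{-1})^{-1}(\alpha_i)$. *)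

(* Defs.v *)
(* V = 'rV[R]_n with the standard inner product,
   R an arbitrary real (ordered) field. *)
From HB Require Import structures.
From mathcomp Require Import all_boot all_order all_algebra.
Set Implicit Arguments. Unset Strict Implicit. Unset Printing Implicit Defensive.
Import Order.TTheory GRing.Theory Num.Theory.
Local Open Scope ring_scope.

Definition dotv {R : pzRingType} {n : nat} (u v : 'rV[R]_n) : R := (u *m v^T) 0 0.

Definition coroot {R : fieldType} {n : nat} (a : 'rV[R]_n) : 'rV[R]_n :=
  (2 / dotv a a) *: a.

Definition refl {R : fieldType} {n : nat} (a x : 'rV[R]_n) : 'rV[R]_n :=
  x - dotv a x *: coroot a.

Definition root_system {R : fieldType} {n : nat} (Phi : seq 'rV[R]_n) : Prop :=
  [/\ 0 \notin Phi,
      (forall v : 'rV[R]_n, exists c : nat -> R,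
          v = \sum_(k < size Phi) c k *: Phi`_k),
      (forall a b, a \in Phi -> b \in Phi -> refl a b \in Phi),
      (forall a b, a \in Phi -> b \in Phi -> exists z : int, dotv b (coroot a) = z%:~R)
    & (forall a (c : R), a \in Phi -> c *: a \in Phi -> c = 1 \/ c = -1)].

(* The Weyl group W = <s_a | a in Phi> acts irreducibly on V: every subspace
   (row space of U) stable under all generators s_a of W is 0 or V. *)
Definition weyl_irreducible {R : fieldType} {n : nat} (Phi : seq 'rV[R]_n) : Prop :=
  forall U : 'M[R]_n,
    (forall a u, a \in Phi -> (u <= U)%MS -> (refl a u <= U)%MS) ->
    U = 0 \/ row_full U.

(* alpha_1, ..., alpha_l (l = n = dim V, indexed by 'I_n) are simple roots *)
Definition simple_roots {R : fieldType} {n : nat} (Phi : seq 'rV[R]_n)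
  (alpha : 'I_n -> 'rV[R]_n) : Prop :=
  (forall j, alpha j \in Phi) /\
  (forall b, b \in Phi -> exists c : 'I_n -> nat,
      b = \sum_j (c j)%:R *: alpha j \/ b = - \sum_j (c j)%:R *: alpha j).

Definition highest_root {R : fieldType} {n : nat} (Phi : seq 'rV[R]_n)
  (alpha : 'I_n -> 'rV[R]_n) (amax : 'rV[R]_n) : Prop :=
  amax \in Phi /\
  (forall b, b \in Phi -> exists c : 'I_n -> nat, amax - b = \sum_j (c j)%:R *: alpha j).

(* alpha_i for i in {0,...,l}, with alpha_0 = - alpha_max; index 0 is ord0,
   index j+1 is lift ord0 j *)
Definition ahat {R : fieldType} {n : nat} (alpha : 'I_n -> 'rV[R]_n) (amax : 'rV[R]_n)
  (i : 'I_n.+1) : 'rV[R]_n :=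
  match unlift ord0 i with None => - amax | Some j => alpha j end.

Definition delta0 {R : pzRingType} {n : nat} (i : 'I_n.+1) : R := (i == ord0)%:R.

Definition s_aff {R : fieldType} {n : nat} (alpha : 'I_n -> 'rV[R]_n) (amax : 'rV[R]_n)
  (i : 'I_n.+1) (x : 'rV[R]_n) : 'rV[R]_n :=
  x - (dotv (ahat alpha amax i) x + delta0 i) *: coroot (ahat alpha amax i).

(* the element s_{i_1} o ... o s_{i_k} of the affine Weyl group;
   every element of \hat W is of this form *)
Definition affW {R : fieldType} {n : nat} (alpha : 'I_n -> 'rV[R]_n) (amax : 'rV[R]_n)
  (word : seq 'I_n.+1) : 'rV[R]_n -> 'rV[R]_n :=
  foldr (fun i f => s_aff alpha amax i \o f) id word.

Definition linp {R : pzRingType} {n : nat} (w : 'rV[R]_n -> 'rV[R]_n) (x : 'rV[R]_n) :=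
  w x - w 0.

Definition regular {R : pzRingType} {n : nat} (w : 'rV[R]_n -> 'rV[R]_n) : Prop :=
  bijective (fun x => x - linp w x).

Definition face {R : realFieldType} {n : nat} (alpha : 'I_n -> 'rV[R]_n) (amax : 'rV[R]_n)
  (i : 'I_n.+1) (x : 'rV[R]_n) : Prop :=
  dotv (ahat alpha amax i) x + delta0 i = 0 /\
  (forall j : 'I_n.+1, j != i -> 0 < dotv (ahat alpha amax j) x + delta0 j).

Definition Vwi {R : realFieldType} {n : nat} (alpha : 'I_n -> 'rV[R]_n) (amax : 'rV[R]_n)
  (w : 'rV[R]_n -> 'rV[R]_n) (i : 'I_n.+1) (y : 'rV[R]_n) : Prop :=
  exists2 x, face alpha amax i x & y = x - w x.

Definition ran_id_sub {R : pzRingType} {n : nat} (f : 'rV[R]_n -> 'rV[R]_n) (y : 'rV[R]_n) : Prop :=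
  exists x, y = x - f x.

(* v = n_{w,i}, i.e. (id - ~w^{-1}) v = alpha_i, i.e. v - m = alpha_i where ~w m = v *)
Definition is_nwi {R : fieldType} {n : nat} (alpha : 'I_n -> 'rV[R]_n) (amax : 'rV[R]_n)
  (w : 'rV[R]_n -> 'rV[R]_n) (i : 'I_n.+1) (v : 'rV[R]_n) : Prop :=
  exists m, linp w m = v /\ v - m = ahat alpha amax i.

(* Main.v *)
Require Import Defs.
From HB Require Import structures.
From mathcomp Require Import all_boot all_order all_algebra.
Import Order.TTheory GRing.Theory Num.Theory.
Local Open Scope ring_scope.

Section Helpers.
Variables (R : realFieldType) (n : nat).
Implicit Types (a b x y : 'rV[R]_n).

Lemma dotvC a b : dotv a b = dotv b a.
Proof. by rewrite /dotv -[b *m a^T]trmxK trmx_mul trmxK [RHS]mxE. Qed.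

Lemma dotvDr a x y : dotv a (x + y) = dotv a x + dotv a y.
Proof. by rewrite /dotv linearD /= mulmxDr mxE. Qed.

Lemma dotvZr a (k : R) x : dotv a (k *: x) = k * dotv a x.
Proof. by rewrite /dotv linearZ /= -scalemxAr mxE. Qed.

Lemma dotvNr a x : dotv a (- x) = - dotv a x.
Proof. by rewrite -scaleN1r dotvZr mulN1r. Qed.

Lemma dotvBr a x y : dotv a (x - y) = dotv a x - dotv a y.
Proof. by rewrite dotvDr dotvNr. Qed.

Lemma dotvDl a b x : dotv (a + b) x = dotv a x + dotv b x.
Proof. by rewrite dotvC dotvDr !(dotvC x). Qed.

Lemma dotvZl a (k : R) x : dotv (k *: a) x = k * dotv a x.
Proof. by rewrite dotvC dotvZr dotvC. Qed.

Lemma dotvBl a b x : dotv (a - b) x = dotv a x - dotv b x.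
Proof. by rewrite dotvC dotvBr !(dotvC x). Qed.

Lemma dotv0r a : dotv a 0 = 0.
Proof. by rewrite -(scale0r 0) dotvZr mul0r. Qed.

Lemma dotv_mulmx a x (A : 'M[R]_n) : dotv a (x *m A) = dotv (a *m A^T) x.
Proof. by rewrite /dotv trmx_mul mulmxA. Qed.

Lemma mulmx_tr x a (c : 'rV[R]_n) : x *m (a^T *m c) = dotv a x *: c.
Proof. by rewrite mulmxA [x *m a^T]mx11_scalar mul_scalar_mx dotvC. Qed.

Lemma dotv_eq0 a : dotv a a = 0 -> a = 0.
Proof.
move=> h; apply/rowP => j; rewrite mxE.
have hs : dotv a a = \sum_k a 0 k * a 0 k.
  by rewrite /dotv mxE; apply: eq_bigr => k _; rewrite mxE.
move: h; rewrite hs => /eqP; rewrite psumr_eq0; last by move=> k _; rewrite -expr2 sqr_ge0.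
move/allP/(_ j (mem_index_enum j))/implyP/(_ isT).
by rewrite mulf_eq0 orbb => /eqP.
Qed.

Definition Pm a : 'M[R]_n := 1%:M - a^T *m coroot a.

Lemma Pm_sym a : (Pm a)^T = Pm a.
Proof.
rewrite /Pm /coroot linearB /= trmx1 trmx_mul trmxK -scalemxAr.
by rewrite linearZ /= -scalemxAl.
Qed.

Lemma Pm_invol a : Pm a *m Pm a = 1%:M.
Proof.
have [h|h] := eqVneq (dotv a a) 0.
  by rewrite /Pm /coroot h invr0 mulr0 scale0r mulmx0 subr0 mulmx1.
set Q := a^T *m coroot a.
have QQ : Q *m Q = Q *+ 2.
  rewrite /Q -mulmxA mulmx_tr -scalemxAr -scaler_nat; congr (_ *: _).
  by rewrite /coroot dotvZr mulfVK.
rewrite /Pm mulmxBl mul1mx mulmxBr mulmx1 QQ mulr2n.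
by rewrite opprB addrA -/Q addrA subrK addrK.
Qed.

Lemma s_aff_mx (alpha : 'I_n -> 'rV[R]_n) amax i x :
  s_aff alpha amax i x =
  x *m Pm (ahat alpha amax i) - delta0 i *: coroot (ahat alpha amax i).
Proof.
by rewrite /s_aff /Pm mulmxBr mulmx1 mulmx_tr scalerDl opprD addrA.
Qed.

Lemma affW_aff (alpha : 'I_n -> 'rV[R]_n) amax word : exists M : 'M[R]_n,
  [/\ M *m M^T = 1%:M, M^T *m M = 1%:M &
      forall x, affW alpha amax word x = x *m M + affW alpha amax word 0].
Proof.
elim: word => [|j word [M [h1 h2 h3]]].
  by exists 1%:M; rewrite trmx1 mulmx1; split=> // x; rewrite mulmx1 addr0.
set P := Pm (ahat alpha amax j).
exists (M *m P); split.
- by rewrite trmx_mul Pm_sym mulmxA -(mulmxA M) Pm_invol mulmx1.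
- by rewrite trmx_mul Pm_sym mulmxA -(mulmxA P) h2 mulmx1 Pm_invol.
move=> x /=; rewrite !s_aff_mx h3 [affW _ _ _ 0]h3 mul0mx add0r.
by rewrite mulmxDl mulmxA addrA.
Qed.

End Helpers.
Arguments Pm {R n}.
Arguments dotvC {R n}.
Arguments dotv_mulmx {R n}.
Arguments mulmx_tr {R n}.
Arguments affW_aff {R n}.

Theorem lemma3p2 (R : realFieldType) (n : nat) (Phi : seq 'rV[R]_n)
  (alpha : 'I_n -> 'rV[R]_n) (amax : 'rV[R]_n)
  (hPhi : root_system Phi) (hirr : weyl_irreducible Phi)
  (hsimple : simple_roots Phi alpha) (hmax : highest_root Phi alpha amax)
  (word : seq 'I_n.+1) (i : 'I_n.+1) :
  let w := affW alpha amax word in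
  let sigma := w \o s_aff alpha amax i in
  regular w ->
  [/\ (* ker(id - ~sigma) is one-dimensional *)
      (exists v : 'rV[R]_n, v != 0 /\
         forall x, (x - linp sigma x = 0 <-> exists c : R, x = c *: v)),
      (* ran(id - sigma) is an affine hyperplane *)
      (exists (a : 'rV[R]_n) (b : R), a != 0 /\
         forall y, (ran_id_sub sigma y <-> dotv a y = b)),
      (* V_{w,i} = V_{sigma,i} \subset ran(id - sigma) *)
      (forall y, Vwi alpha amax w i y <-> Vwi alpha amax sigma i y),
      (forall y, Vwi alpha amax sigma i y -> ran_id_sub sigma y)
    & (* n_{w,i} is a normal vector to ran(id - sigma), <n_{w,i}, alpha_i^vee> = 1 *)
      (forall v, is_nwi alpha amax w i v ->
         [/\ v != 0,
             (forall y z, ran_id_sub sigma y -> ran_id_sub sigma z -> dotv v (y - z) = 0)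
           & dotv v (coroot (ahat alpha amax i)) = 1])].
Proof.
move=> w sigma hreg.
have [M [hM1 hM2 hw]] := affW_aff alpha amax word.
have hw' : forall x, w x = x *m M + w 0 := hw.
pose a := ahat alpha amax i.
pose c := coroot a.
pose P := Pm a.
have hs : forall x, s_aff alpha amax i x = x *m P - delta0 i *: c.
  by move=> x; rewrite s_aff_mx.
have hP : forall x, x *m P = x - dotv a x *: c.
  move=> x. rewrite /P /Pm. rewrite mulmxBr mulmx1. rewrite mulmx_tr. done.
have ha0 : a != 0.
  case: hPhi => h0 _ _ _ _; case: hsimple => hal _; case: hmax => ham _.
  rewrite /a /ahat; case: unliftP => [j _|_].
    by apply: contraNneq h0 => <-.
  by rewrite oppr_eq0; apply: contraNneq h0 => <-.
have haa : dotv a a != 0 by apply: contra ha0 => /eqP /dotv_eq0 ->.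
have hac : dotv a c = 2. rewrite /c /coroot dotvZr. by rewrite mulfVK.
have hlinw : forall x, linp w x = x *m M. move=> x. by rewrite /linp hw' addrK.
have hsig : forall x, linp sigma x = x *m (P *m M).
  move=> x; rewrite /linp /sigma /= !hs (hw' (_ - _)) (hw' (0 *m P - _)) mul0mx sub0r.
  by rewrite mulmxDl mulmxA -(addrA _ _ (w 0)) addrK.
pose N := 1%:M - M.
have hF : forall x, x - linp w x = x *m N by move=> x; rewrite hlinw /N mulmxBr mulmx1.
have [g hfg hgf] : bijective (fun x => x - linp w x) := hreg.
have hgF : forall x, g (x *m N) = x by move=> x; rewrite -hF hfg.
have hFg : forall y, g y *m N = y by move=> y; rewrite -hF hgf.
have hgD : forall y z, g (y + z) = g y + g z.
  by move=> y z; rewrite -{1}(hFg y) -{1}(hFg z) -mulmxDl hgF.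
have hgZ : forall (k : R) y, g (k *: y) = k *: g y.
  by move=> k y; rewrite -{1}(hFg y) scalemxAl hgF.
have hker : forall x, x - linp sigma x = x *m N + dotv a x *: (c *m M).
  move=> x; rewrite hsig mulmxA hP mulmxBl /N mulmxBr mulmx1 -scalemxAl.
  by rewrite opprB addrA addrAC.
pose u := g (c *m M).
have key : forall v, is_nwi alpha amax w i v ->
   [/\ v *m M^T = v - a, forall y, dotv v y = dotv a (g y) & dotv v c = 1].
  move=> v [m [hm1 hm2']]; have hm2 : v - m = a := hm2'.
  have hvM : v *m M^T = v - a.
    have -> : v *m M^T = m by rewrite -hm1 hlinw -mulmxA hM1 mulmx1.
    by rewrite -hm2 subKr.
  have hv1 : a = v *m N^T.
    by rewrite /N linearB /= trmx1 mulmxBr mulmx1 hvM subKr.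
  split => //.
    by move=> y; rewrite hv1 -dotv_mulmx hFg.
  have ht : dotv (v *m M^T) (v *m M^T) = dotv v v.
    by rewrite dotv_mulmx trmxK -mulmxA hM2 mulmx1.
  have ha' : a = v - v *m M^T by rewrite hvM subKr.
  have e1 : dotv a a = dotv v a *+ 2.
    rewrite ha' dotvBl !dotvBr ht (dotvC (v *m M^T) v) mulr2n.
    by rewrite opprB.
  have hd : dotv v a != 0.
    by apply: contraNneq haa => h; rewrite e1 h mul0rn.
  have h2 : (2 : R) != 0 by rewrite pnatr_eq0.
  rewrite /c /coroot dotvZr e1 -(mulr_natl (dotv v a) 2) invfM mulrA mulfV // mul1r.
  by rewrite mulVf.
pose v0 := g (- a) *m M.
have hv0 : is_nwi alpha amax w i v0.
  exists (g (- a)); split; first by rewrite hlinw.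
  have := hFg (- a); rewrite /N mulmxBr mulmx1 => h.
  by rewrite /v0 -opprB h opprK.
have [hv0M hv02 hv03] := key v0 hv0.
have hu : dotv a u = -1.
  rewrite -hv02 dotv_mulmx hv0M dotvBl hv03 hac.
  by rewrite mulr2n opprD addrA subrr sub0r.
have hker0 : forall v, is_nwi alpha amax w i v ->
    forall x, dotv v (x - linp sigma x) = 0.
  move=> v hv x; have [_ hv2 _] := key v hv.
  by rewrite hv2 hker hgD hgF hgZ dotvDr dotvZr hu mulrN1 subrr.
have he : forall x, x - sigma x = (x - linp sigma x) - sigma 0.
  by move=> x; rewrite /linp opprB addrA addrAC addrK.
have hu0 : u != 0.
  apply/eqP => hu0; move: hu; rewrite hu0 dotv0r => /eqP.
  by rewrite eq_sym oppr_eq0 oner_eq0.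
split.
- exists u; split => // x; split.
    move=> hx; exists (- dotv a x).
    move: hx; rewrite hker => /eqP; rewrite addr_eq0 => /eqP h.
    by rewrite -[in LHS](hgF x) h -scaleNr hgZ.
  move=> [k ->]; rewrite hker -scalemxAl hFg dotvZr hu mulrN1 scaleNr.
  by rewrite subrr.
- exists v0, (- dotv v0 (sigma 0)); split.
    apply/eqP => h0; move: ha0.
    have -> : a = v0 - v0 *m M^T by rewrite hv0M subKr.
    by rewrite h0 mul0mx subrr eqxx.
  move=> y; split.
    by move=> [x ->]; rewrite he dotvBr (hker0 v0 hv0 x) sub0r.
  move=> h; exists (g (y + sigma 0)).
  rewrite he hker hFg -hv02 dotvDr h addNr scale0r addr0 addrK //.
- move=> y; split; move=> [x hx ->]; exists x => //;
    by rewrite /sigma /= /s_aff (proj1 hx) scale0r subr0.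
- by move=> y [x _ ->]; exists x.
- move=> v hv; have [hvM hv2 hv3] := key v hv; split => //.
    apply/eqP => h0; move: ha0.
    have -> : a = v - v *m M^T by rewrite hvM subKr.
    by rewrite h0 mul0mx subrr eqxx.
  move=> y z [x1 ->] [x2 ->].
  rewrite (he x1) (he x2) (opprB (x2 - linp sigma x2)) subrKA dotvBr.
  by rewrite (hker0 v hv x1) (hker0 v hv x2) subrr.
Qed.
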